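(* For every integer $n\ge 1$, $$C_n=\frac{1}{\pi}\int_0^{\infty}\frac{t^2}{\left(t^2+\frac14\right)^2}\left[\left(2-\frac{1}{\sqrt{t^2+\frac14}}\right)^{n-1}+\left(2+\frac{1}{\sqrt{t^2+\frac14}}\right)^{n-1}\right]\mathrm{d}t .$$
   Context: $C_n=\frac{1}{n+1}\binom{2n}{n}$ denotes the $n$-th Catalan number ($n\ge 0$). *)

(* Defs.v *)
From Stdlib Require Import Reals.
From Coquelicot Require Import Coquelicot.
Open Scope R_scope.

Definition catalan (n : nat) : R := Binomial.C (2 * n) n / INR (n + 1).

Definition catalan_integrand (n : nat) (t : R) : R :=
  t ^ 2 / (t ^ 2 + 1 / 4) ^ 2 *
  ((2 - 1 / sqrt (t ^ 2 + 1 / 4)) ^ (n - 1) +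
   (2 + 1 / sqrt (t ^ 2 + 1 / 4)) ^ (n - 1)).

(* Main.v *)
Require Import Defs.
From Stdlib Require Import Reals Nsatz Lra Lia Factorial.
From Coquelicot Require Import Coquelicot.
Open Scope R_scope.
Definition uu t := 1 + cos t.
Definition vv t := 1 - cos t.
Definition gg (m:nat) t := sin t ^ 2 * (uu t ^ m + vv t ^ m).
Definition DD (m:nat) t := sin t ^ 3 * (uu t ^ m - vv t ^ m).
Fixpoint AA (m : nat) (t : R) : R := match m with
 | O => t - sin t * cos t
 | S k => (DD k t + (2 * INR k + 3) * AA k t) / (INR k + 3) end.

Lemma DD_deriv k t : is_derive (DD k) t ((INR k + 3) * gg (S k) t - (2*INR k+3) * gg k t).
Proof. unfold DD, gg, uu, vv. auto_derive; [trivial|].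
 pose proof (sin2_cos2 t) as H. unfold Rsqr in H.
 destruct k as [|k].
 - simpl. nsatz.
 - rewrite S_INR. simpl pred. simpl pow. nsatz.
Qed.

Lemma AA_deriv m t : is_derive (AA m) t (gg m t).
Proof.
induction m as [|k IH].
- simpl. unfold gg, uu, vv. auto_derive; [trivial|].
  pose proof (sin2_cos2 t) as H. unfold Rsqr in H. simpl. nsatz.
- pose proof (pos_INR k).
  pose proof (is_derive_scal _ t (/(INR k+3)) _ (is_derive_plus _ _ t _ _ (DD_deriv k t) (is_derive_scal _ t (2*INR k+3) _ IH))) as HD.
  assert (E : gg (S k) t = / (INR k + 3) * (plus ((INR k + 3) * gg (S k) t - (2*INR k+3) * gg k t) ((2*INR k+3) * gg k t))).
  { unfold plus; simpl. field. lra. }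
  rewrite E. eapply is_derive_ext; [|exact HD]. intros x. simpl. unfold plus; simpl. field. lra.
Qed.

Lemma AA_0 m : AA m 0 = 0.
Proof. induction m; simpl; [rewrite sin_0; ring|]. rewrite IHm. unfold DD. rewrite sin_0. simpl. field.
 pose proof (pos_INR m). lra. Qed.

Lemma catalan_rec k : catalan (S k) * (INR k + 2) = 2 * (2 * INR k + 1) * catalan k.
Proof.
unfold catalan, Binomial.C.
replace (2 * S k)%nat with (S (S (2 * k))) by lia.
replace (S (S (2 * k)) - S k)%nat with (S k) by lia.
replace (2 * k - k)%nat with k by lia.
remember (2*k)%nat as j.
change (fact (S (S j))) with (S (S j) * (S j * fact j))%nat.
change (fact (S k)) with (S k * fact k)%nat.
pose proof (INR_fact_neq_0 k). pose proof (INR_fact_neq_0 j).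
pose proof (pos_INR k).
rewrite !mult_INR, !plus_INR, !S_INR. subst j. rewrite mult_INR. simpl INR.
field. repeat split; lra.
Qed.

Lemma catalan_1 : catalan 1 = 1.
Proof. unfold catalan, Binomial.C. simpl. field. Qed.

Lemma AA_PI2 m : AA m (PI/2) = PI * catalan (S m) / 2 ^ (S m).
Proof.
induction m.
- simpl. rewrite sin_PI2, cos_PI2, catalan_1. field.
- simpl AA. rewrite IHm. unfold DD, uu, vv. rewrite sin_PI2, cos_PI2.
  pose proof (catalan_rec (S m)) as Hr. rewrite S_INR in Hr.
  pose proof (pos_INR m).
  assert (Ec : catalan (S (S m)) = 2 * (2 * (INR m + 1) + 1) * catalan (S m) / (INR m + 1 + 2)).
  { rewrite <- Hr. unfold Rdiv. rewrite Rmult_assoc, Rinv_r; [ring|lra]. }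
  rewrite Ec. simpl pow. rewrite Rplus_0_r, Rminus_0_r, Rminus_diag. pose proof (pow_lt 2 m). unfold Rdiv. rewrite Rinv_mult. field. lra.
Qed.

Lemma sqrt_rel x : sqrt (1 + (2 * x)²) = 2 * sqrt (x ^ 2 + 1 / 4).
Proof.
apply sqrt_lem_1.
- unfold Rsqr. nra.
- pose proof (sqrt_pos (x ^ 2 + 1/4)). lra.
- replace (2 * sqrt (x ^ 2 + 1 / 4) * (2 * sqrt (x ^ 2 + 1 / 4))) with (4 * (sqrt (x ^ 2 + 1 / 4) * sqrt (x ^ 2 + 1 / 4))) by ring.
  rewrite sqrt_sqrt; [unfold Rsqr; field| nra].
Qed.

Lemma integrand_eq m x : catalan_integrand (S m) x = 2 ^ (S m) * gg m (atan (2 * x)) * (2 / (1 + (2 * x) ^ 2)).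
Proof.
unfold catalan_integrand, gg, uu, vv. rewrite cos_atan, sin_atan, sqrt_rel.
replace (S m - 1)%nat with m by lia.
set (s := sqrt (x ^ 2 + 1 / 4)).
assert (Hs : 0 < s). { apply sqrt_lt_R0. nra. }
assert (Hs2 : s * s = x ^ 2 + 1/4). { apply sqrt_sqrt. nra. }
assert (E1 : 2 ^ m * (1 + 1 / (2 * s)) ^ m = (2 + 1 / s) ^ m).
{ rewrite <- Rpow_mult_distr. f_equal. field. lra. }
assert (E2 : 2 ^ m * (1 - 1 / (2 * s)) ^ m = (2 - 1 / s) ^ m).
{ rewrite <- Rpow_mult_distr. f_equal. field. lra. }
rewrite <- E1, <- E2. rewrite <- Hs2. simpl pow. unfold Rsqr.
replace (1 + 2 * x * (2 * x * 1)) with (4 * (s*s)) by (rewrite Hs2; field). field. lra.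
Qed.

Lemma integrand_cont n x : continuous (catalan_integrand n) x.
Proof.
apply (@ex_derive_continuous R_AbsRing R_NormedModule). unfold catalan_integrand. auto_derive.
assert (0 < x ^ 2 + 1/4) by nra.
assert (0 < sqrt (x ^ 2 + 1/4)) by (apply sqrt_lt_R0; lra).
simpl in H, H0. repeat split; try lra. apply Rgt_not_eq; apply Rmult_lt_0_compat; lra.
Qed.

Lemma lim_inv2 : filterlim (fun b => / (2 * b)) (Rbar_locally p_infty) (locally 0).
Proof.
assert (H2 : is_lim (fun b => 2 * b) p_infty p_infty).
{ intros P [M HM]. exists (M/2). intros x Hx. apply HM. lra. }
pose proof (is_lim_inv _ _ _ H2) as H. simpl in H.
apply H. discriminate.
Qed.

Theorem mainTheorem1 (n : nat) (hn : (1 <= n)%nat) :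
  exists I : R,
    is_RInt_gen (catalan_integrand n) (at_point 0) (Rbar_locally p_infty) I /\
    catalan n = / PI * I.
Proof.
destruct n as [|m]; [lia|].
set (F := fun x => 2 ^ S m * AA m (atan (2 * x))).
assert (HFd : forall x, is_derive F x (catalan_integrand (S m) x)).
{ intros x. rewrite integrand_eq. unfold F.
  assert (Ha : is_derive (fun x => atan (2*x)) x (2 / (1 + (2*x)^2))).
  { auto_derive; [trivial|]. field. nra. }
  pose proof (is_derive_comp (AA m) (fun x => atan (2*x)) x _ _ (AA_deriv m _) Ha) as Hc.
  pose proof (is_derive_scal _ x (2 ^ S m) _ Hc) as Hs.
  match type of Hs with is_derive _ _ ?v => replace (2 ^ S m * gg m (atan (2 * x)) * (2 / (1 + (2 * x) ^ 2))) with v end.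
  - exact Hs.
  - unfold scal; simpl; unfold mult; simpl. ring. }
assert (F0 : F 0 = 0).
{ unfold F. rewrite Rmult_0_r, atan_0, AA_0. ring. }
set (L := 2 ^ S m * AA m (PI/2)).
assert (HFl : filterlim F (Rbar_locally p_infty) (locally L)).
{ set (G := fun y => 2 ^ S m * AA m (PI/2 - atan y)).
  assert (HG : continuous G 0).
  { apply (@ex_derive_continuous R_AbsRing R_NormedModule). eexists. unfold G.
    apply is_derive_scal. apply (is_derive_comp (AA m) (fun y => PI/2 - atan y)).
    apply AA_deriv. auto_derive; trivial. }
  assert (G0: G 0 = L) by (unfold G, L; rewrite atan_0, Rminus_0_r; reflexivity).
  rewrite <- G0.
  apply filterlim_ext_loc with (f := fun b => G (/(2*b))).
  - exists 0. intros b Hb. unfold G, F. rewrite atan_inv by lra. do 2 f_equal. ring.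
  - apply filterlim_comp with (G := locally 0). apply lim_inv2. exact HG. }
exists L. split.
- apply filterlimi_lim_ext with (f := fun ab => F (snd ab) - F (fst ab)).
  + intros [a b]. simpl. apply (is_RInt_derive F).
    * intros; apply HFd.
    * intros; apply integrand_cont.
  + intros P HP. apply HFl in HP.
    apply Filter_prod with (Q := fun a => a = 0) (R := fun b => P (F b)).
    * reflexivity.
    * exact HP.
    * intros a b -> Hb. simpl. rewrite F0, Rminus_0_r. exact Hb.
- unfold L. rewrite AA_PI2. pose proof PI_RGT_0. field. split; [apply pow_nonzero|]; lra.
Qed.
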